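(* For $n>2$, there is no non-trivial antisymmetric real bilinear map $b:\mathbb{C}^{n+1}\times\mathbb{C}^{n+1}\to\mathbb{C}^{n+1}$ that is equivariant under ${\sf SO}(1,n)$, i.e. satisfies $b(Au,Av)=Ab(u,v)$ for all $A\in{\sf SO}(1,n)$.
   Context: ${\sf SO}(1,n)$ is the special orthogonal group of the Lorentz form $-x_0^2+x_1^2+\dots+x_n^2$ on $\mathbb{R}^{n+1}$, acting on $\mathbb{C}^{n+1}=\mathbb{R}^{n+1}+i\mathbb{R}^{n+1}$ diagonally by $A(x+iy)=Ax+iAy$. *)

(* Defs.v *)
From HB Require Import structures.
From mathcomp Require Import all_boot all_order all_algebra.
From mathcomp Require Import complex.
From mathcomp Require Import reals.
Set Implicit Arguments. Unset Strict Implicit. Unset Printing Implicit Defensive.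
Import Order.TTheory GRing.Theory Num.Theory.
Local Open Scope ring_scope.
Local Open Scope complex_scope.

Definition lorentzJ (R : realType) (n : nat) : 'M[R]_(n.+1) :=
  \matrix_(i, j) (if i == j then (if i == ord0 then -1 else 1) else 0).

Definition in_SO1n (R : realType) (n : nat) (A : 'M[R]_(n.+1)) : Prop :=
  A^T *m lorentzJ R n *m A = lorentzJ R n /\ \det A = 1.

(* diagonal action on C^{n+1} = R^{n+1} + i R^{n+1}: A(x+iy) = Ax + iAy *)
Definition cact (R : realType) (n : nat) (A : 'M[R]_(n.+1))
  (u : 'cV[R[i]]_(n.+1)) : 'cV[R[i]]_(n.+1) :=
  map_mx (fun x : R => x%:C) A *m u.

Definition real_bilinear (R : realType) (n : nat)
  (b : 'cV[R[i]]_(n.+1) -> 'cV[R[i]]_(n.+1) -> 'cV[R[i]]_(n.+1)) : Prop :=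
  (forall (r : R) u1 u2 v, b (r%:C *: u1 + u2) v = r%:C *: b u1 v + b u2 v) /\
  (forall (r : R) u v1 v2, b u (r%:C *: v1 + v2) = r%:C *: b u v1 + b u v2).

Definition antisym_map (R : realType) (n : nat)
  (b : 'cV[R[i]]_(n.+1) -> 'cV[R[i]]_(n.+1) -> 'cV[R[i]]_(n.+1)) : Prop :=
  forall u v, b u v = - b v u.

(* Main.v *)
Require Import Defs.
From HB Require Import structures.
From mathcomp Require Import all_boot all_order all_algebra.
From mathcomp Require Import complex.
From mathcomp Require Import reals.
From mathcomp Require Import zify.
Import GRing.Theory Num.Theory.
Local Open Scope ring_scope.
Set Implicit Arguments. Unset Strict Implicit.

Section Aux.
Variable R : realType.
Variable n : nat.
Local Open Scope complex_scope.

Definition sgn (p q : 'I_n.+1) (i : 'I_n.+1) : R :=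
  if (i == p) || (i == q) then -1 else 1.

Definition Dm (p q : 'I_n.+1) : 'M[R]_n.+1 := diag_mx (\row_i sgn p q i).

Lemma sgn_sq p q i : sgn p q i * sgn p q i = 1.
Proof. by rewrite /sgn; case: ifP; rewrite ?mulrNN mulr1. Qed.

Lemma lorentz_diag : lorentzJ R n = diag_mx (\row_i (if i == ord0 then -1 else 1)).
Proof.
apply/matrixP=> i j; rewrite !mxE.
by case: (eqVneq i j) => [->|h]; rewrite ?eqxx ?(negbTE h) ?mulr1n ?mulr0n.
Qed.

Lemma Dm_SO p q : p != q -> in_SO1n (Dm p q).
Proof.
move=> npq; split.
  rewrite /Dm tr_diag_mx lorentz_diag !mulmx_diag; congr diag_mx.
  by apply/rowP=> i; rewrite !mxE mulrC mulrA sgn_sq mul1r.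
rewrite /Dm det_diag (bigD1 p) //= (bigD1 q) /=; last by rewrite eq_sym npq.
rewrite big1 ?mulr1.
  by rewrite !mxE /sgn !eqxx !orbT /= mulrNN mulr1.
move=> i /andP [hip hiq]; rewrite mxE /sgn (negbTE hip) (negbTE hiq) //.
Qed.

Lemma cact_Dm p q (z : 'cV[R[i]]_n.+1) i :
  cact (Dm p q) z i 0 = (sgn p q i)%:C * z i 0.
Proof.
by rewrite /cact /Dm map_diag_mx mul_diag_mx !mxE.
Qed.

Definition wj (j : 'I_n.+1) (u : 'cV[R[i]]_n.+1) : 'cV[R[i]]_n.+1 :=
  \col_i (if i == j then u i 0 else 0).

Lemma wj_decomp u : u = \sum_j wj j u.
Proof.
apply/matrixP=> i l; rewrite (ord1 l) summxE (bigD1 i) //= big1 ?addr0.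
  by rewrite mxE eqxx.
by move=> k hk; rewrite mxE eq_sym (negbTE hk).
Qed.

Lemma cact_wj p q j u : cact (Dm p q) (wj j u) = (sgn p q j)%:C *: wj j u.
Proof.
apply/matrixP=> i l; rewrite (ord1 l) cact_Dm !mxE.
by case: eqP => [->|]; rewrite ?mulr0.
Qed.

Lemma sign_choice (j k m : 'I_n.+1) : exists p,
  [|| p == j, p == k | p == m] /\
  (if j == p then -1 else 1) * (if k == p then -1 else 1) *
  (if m == p then -1 else 1) = -1 :> R.
Proof.
case: (eqVneq j k) => [jk|njk]; first subst k.
  exists m; split; first by rewrite eqxx !orbT.
  case: (eqVneq j m) => [jm|njm]; first by subst m; rewrite eqxx mulrNN !mul1r.
  by rewrite eqxx !mul1r.
case: (eqVneq j m) => [jm|njm]; first subst m.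
  exists k; split; first by rewrite eqxx !orbT.
  by rewrite eqxx (negbTE njk) mul1r mulr1.
exists j; split; first by rewrite eqxx.
by rewrite eqxx eq_sym (negbTE njk) eq_sym (negbTE njm) !mulr1.
Qed.

End Aux.

Theorem fact2p3 (R : realType) (n : nat) (hn : (2 < n)%N)
  (b : 'cV[R[i]]_(n.+1) -> 'cV[R[i]]_(n.+1) -> 'cV[R[i]]_(n.+1)) :
  real_bilinear b -> antisym_map b ->
  (forall A : 'M[R]_(n.+1), in_SO1n A ->
     forall u v, b (cact A u) (cact A v) = cact A (b u v)) ->
  forall u v, b u v = 0.
Proof.
move=> [bl br] _ H.
have c1 : (1 : R)%:C%C = 1 by [].
have b0l : forall v, b 0 v = 0.
  move=> v; have := bl 1 0 0 v; rewrite scaler0 addr0 c1 scale1r.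
  by move/eqP; rewrite -subr_eq0 opprD addrA subrr sub0r oppr_eq0 => /eqP.
have b0r : forall u, b u 0 = 0.
  move=> u; have := br 1 u 0 0; rewrite scaler0 addr0 c1 scale1r.
  by move/eqP; rewrite -subr_eq0 opprD addrA subrr sub0r oppr_eq0 => /eqP.
have bDl : forall x y v, b (x + y) v = b x v + b y v.
  by move=> x y v; have := bl 1 x y v; rewrite c1 !scale1r.
have bDr : forall u x y, b u (x + y) = b u x + b u y.
  by move=> u x y; have := br 1 u x y; rewrite c1 !scale1r.
have bZl : forall r x v, b (r%:C%C *: x) v = r%:C%C *: b x v.
  by move=> r x v; have := bl r x 0 v; rewrite !addr0 b0l addr0.
have bZr : forall r u x, b u (r%:C%C *: x) = r%:C%C *: b u x.
  by move=> r u x; have := br r u x 0; rewrite !addr0 b0r addr0.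
have key : forall j k u v, b (wj j u) (wj k v) = 0.
  move=> j k u v; apply/matrixP=> m l; rewrite (ord1 l) mxE.
  have [p [hp hs]] := sign_choice R j k m.
  have : (0 < #|~: [set j; k; m]|)%N.
    have hS : (#|[set j; k; m]| <= 3)%N.
      have h1 := (leq_card_setU (j |: [set k]) [set m]).1.
      rewrite cardsU1 !cards1 in h1; have := leq_b1 (j \notin [set k]); lia.
    have hc := cardsC [set j; k; m]; rewrite card_ord in hc; lia.
  case/card_gt0P => q; rewrite !inE => hq.
  have npq : p != q.
    apply/eqP => epq; subst q; move: hq hp.
    by case: (p == j); case: (p == k); case: (p == m).
  move: hq => /norP [/norP [qj qk] qm].
  have sgE : forall i, q != i -> sgn R p q i = if i == p then -1 else 1.
    by move=> i hi; rewrite /sgn (eq_sym i q) (negbTE hi) orbF.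
  have := H _ (@Dm_SO R n p q npq) (wj j u) (wj k v).
  rewrite !cact_wj bZl bZr scalerA => /(congr1 (fun M : 'cV[R[i]]_n.+1 => M m 0)).
  rewrite cact_Dm mxE => e.
  set z := b (wj j u) (wj k v) m 0 in e *.
  have e2 : ((sgn R p q j)%:C%C * (sgn R p q k)%:C%C * (sgn R p q m)%:C%C) * z = z.
    by rewrite [X in X * z]mulrC -mulrA e mulrA -rmorphM sgn_sq rmorph1 mul1r.
  move: e2; rewrite -!rmorphM (sgE _ qj) (sgE _ qk) (sgE _ qm) hs.
  rewrite rmorphN1 mulN1r => /eqP.
  rewrite -subr_eq0 -opprD oppr_eq0 -mulr2n -mulr_natl mulf_eq0 pnatr_eq0 /=.
  by move/eqP.
move=> u v.
rewrite (wj_decomp u) (big_morph (b^~ v) (fun x y => bDl x y v) (b0l v)).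
rewrite big1 // => j _.
rewrite (wj_decomp v) (big_morph (b (wj j u)) (bDr (wj j u)) (b0r _)).
by rewrite big1 // => k _; apply: key.
Qed.
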